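(* For all $a,b\in\mathbb{R}$, the matrix $$M_{10}^{(2)}(a,b)=\begin{bmatrix} 1 & 1 & 1 & 1 & 1 & 1 & 1 & 1 & 1 & 1 \\ 1 & \mathrm{i} & \mathrm{i} e^{\mathrm{i} b} & e^{\mathrm{i} b} & -\mathrm{i} & -e^{\mathrm{i} b} & e^{\mathrm{i} b} & -\mathrm{i} e^{\mathrm{i} b} & -e^{\mathrm{i} b} & -1 \\ 1 & -1 & -\mathrm{i} e^{\mathrm{i} b} & -e^{\mathrm{i} a} & e^{\mathrm{i} a} & \mathrm{i} e^{\mathrm{i} b} & -\mathrm{i} e^{\mathrm{i} a} & e^{\mathrm{i} a} & -e^{\mathrm{i} a} & \mathrm{i} e^{\mathrm{i} a} \\ 1 & \mathrm{i} & -\mathrm{i} & -\mathrm{i} e^{\mathrm{i} a} & \mathrm{i} & -\mathrm{i} & \mathrm{i} e^{\mathrm{i} a} & -1 & -1 & 1 \\ 1 & 1 & \mathrm{i} & -1 & \mathrm{i} & \mathrm{i} & -1 & -\mathrm{i} & -\mathrm{i} & -\mathrm{i} \\ 1 & -\mathrm{i} & -1 & e^{\mathrm{i} a} & 1 & -1 & -e^{\mathrm{i} a} & -1 & 1 & \mathrm{i} \\ 1 & \mathrm{i} & e^{\mathrm{i} b} & -e^{\mathrm{i} b} & -\mathrm{i} & -\mathrm{i} e^{\mathrm{i} b} & -e^{\mathrm{i} b} & \mathrm{i} e^{\mathrm{i} b} & e^{\mathrm{i} b} & -1 \\ 1 & -1 & -\mathrm{i} e^{\mathrm{i} b} & \mathrm{i}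 e^{\mathrm{i} a} & -e^{\mathrm{i} a} & \mathrm{i} e^{\mathrm{i} b} & e^{\mathrm{i} a} & -e^{\mathrm{i} a} & e^{\mathrm{i} a} & -\mathrm{i} e^{\mathrm{i} a} \\ 1 & -\mathrm{i} & \mathrm{i} e^{\mathrm{i} b} & \mathrm{i} e^{\mathrm{i} a} & -1 & -\mathrm{i} e^{\mathrm{i} b} & -\mathrm{i} e^{\mathrm{i} a} & \mathrm{i} & -1 & 1 \\ 1 & -\mathrm{i} & -e^{\mathrm{i} b} & -\mathrm{i} e^{\mathrm{i} a} & -1 & e^{\mathrm{i} b} & \mathrm{i} e^{\mathrm{i} a} & 1 & \mathrm{i} & -1 \end{bmatrix}$$ is a dephased complex Hadamard matrix, i.e. $M_{10}^{(2)}(a,b)\,M_{10}^{(2)}(a,b)^*=10\,I_{10}$.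
   Context: $^*$ denotes conjugate transpose; a dephased complex Hadamard matrix of order $d$ is a $d\times d$ matrix with unimodular entries, first row and first column all equal to $1$, and $HH^*=dI_d$. *)

(* Defs.v *)
From HB Require Import structures.
From mathcomp Require Import all_boot all_order all_algebra.
From mathcomp Require Import complex.
From mathcomp Require Import reals trigo.
Set Implicit Arguments. Unset Strict Implicit. Unset Printing Implicit Defensive.
Import Order.TTheory GRing.Theory Num.Theory.
Local Open Scope ring_scope.
Local Open Scope complex_scope.

Definition expi (R : realType) (x : R) : R[i] := (cos x) +i* (sin x).

Definition ctrmx (R : rcfType) (m n : nat) (A : 'M[R[i]]_(m, n)) : 'M[R[i]]_(n, m) :=
  map_mx (@conjc R) A^T.

(* dephased complex Hadamard matrix of order d (d >= 1, indices 'I_d.+1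
   are used via d = n.+1 so that row/column 0 exist) *)
Definition dephased_complex_hadamard (R : rcfType) (n : nat)
    (H : 'M[R[i]]_n.+1) : Prop :=
  [/\ (forall i j, `|H i j| = 1),
      (forall j, H ord0 j = 1),
      (forall i, H i ord0 = 1) &
      H *m ctrmx H = (n.+1)%:R%:M].

Section M10.
Variables (R : realType) (a b : R).
Local Notation I := ('i : R[i]).
Local Notation A := (expi a).
Local Notation B := (expi b).

Definition M10_2_rows : seq (seq R[i]) :=
 [:: [:: 1; 1; 1; 1; 1; 1; 1; 1; 1; 1];
     [:: 1; I; I * B; B; -I; -B; B; -I * B; -B; -1];
     [:: 1; -1; -I * B; -A; A; I * B; -I * A; A; -A; I * A];
     [:: 1; I; -I; -I * A; I; -I; I * A; -1; -1; 1];
     [:: 1; 1; I; -1; I; I; -1; -I; -I; -I];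
     [:: 1; -I; -1; A; 1; -1; -A; -1; 1; I];
     [:: 1; I; B; -B; -I; -I * B; -B; I * B; B; -1];
     [:: 1; -1; -I * B; I * A; -A; I * B; A; -A; A; -I * A];
     [:: 1; -I; I * B; I * A; -1; -I * B; -I * A; I; -1; 1];
     [:: 1; -I; -B; -I * A; -1; B; I * A; 1; I; -1]].

Definition M10_2 : 'M[R[i]]_10 :=
  \matrix_(i < 10, j < 10) nth 0 (nth [::] M10_2_rows i) j.
End M10.

(* Main.v *)
Require Import Defs.
From HB Require Import structures.
From mathcomp Require Import all_boot all_order all_algebra.
From mathcomp Require Import complex.
From mathcomp Require Import reals trigo.
From mathcomp Require Import lra.
Import Order.TTheory GRing.Theory Num.Theory.
Local Open Scope ring_scope.
Local Open Scope complex_scope.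

Section S.
Variable R : rcfType.
Implicit Types x y : R[i].
Lemma ReD x y : complex.Re (x + y) = complex.Re x + complex.Re y. Proof. by move: x y => [? ?] [? ?]; reflexivity. Qed.
Lemma ImD x y : complex.Im (x + y) = complex.Im x + complex.Im y. Proof. by move: x y => [? ?] [? ?]; reflexivity. Qed.
Lemma ReM x y : complex.Re (x * y) = complex.Re x * complex.Re y - complex.Im x * complex.Im y. Proof. by move: x y => [? ?] [? ?]; reflexivity. Qed.
Lemma ImM x y : complex.Im (x * y) = complex.Re x * complex.Im y + complex.Im x * complex.Re y. Proof. by move: x y => [? ?] [? ?]; reflexivity. Qed.
Lemma ReN x : complex.Re (- x) = - complex.Re x. Proof. by move: x => [? ?]; reflexivity. Qed.
Lemma ImN x : complex.Im (- x) = - complex.Im x. Proof. by move: x => [? ?]; reflexivity. Qed.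
Lemma ReJ x : complex.Re (x^*) = complex.Re x. Proof. by move: x => [? ?]; reflexivity. Qed.
Lemma ImJ x : complex.Im (x^*) = - complex.Im x. Proof. by move: x => [? ?]; reflexivity. Qed.
Lemma Re1 : complex.Re (1 : R[i]) = 1. Proof. by []. Qed.
Lemma Im1 : complex.Im (1 : R[i]) = 0. Proof. by []. Qed.
Lemma Re0 : complex.Re (0 : R[i]) = 0. Proof. by []. Qed.
Lemma Im0 : complex.Im (0 : R[i]) = 0. Proof. by []. Qed.
Lemma Rei : complex.Re ('i : R[i]) = 0. Proof. by []. Qed.
Lemma Imi : complex.Im ('i : R[i]) = 1. Proof. by []. Qed.
Lemma ReMn x n : complex.Re (x *+ n) = complex.Re x *+ n.
Proof. by elim: n => [|n IH] //; rewrite !mulrS ReD IH. Qed.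
Lemma ImMn x n : complex.Im (x *+ n) = complex.Im x *+ n.
Proof. by elim: n => [|n IH] //; rewrite !mulrS ImD IH. Qed.
End S.

Lemma ReE (R : realType) (a : R) : complex.Re (expi a) = cos a. Proof. by []. Qed.
Lemma ImE (R : realType) (a : R) : complex.Im (expi a) = sin a. Proof. by []. Qed.


Lemma norm1 (R : rcfType) (z : R[i]) :
  complex.Re z ^+ 2 + complex.Im z ^+ 2 = 1 -> `|z| = 1.
Proof. by move=> h; rewrite normc_def h sqrtr1. Qed.

Lemma prodM (R : realType) (a b : R) :
  (M10_2 a b) *m ctrmx (M10_2 a b) = 10%:R%:M.
Proof.
apply/matrixP => i j; rewrite !mxE /ctrmx.
under eq_bigr do rewrite !mxE.
rewrite -(big_mkord xpredT (fun k => nth 0 (nth [::] (M10_2_rows a b) i) k *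
   (nth 0 (nth [::] (M10_2_rows a b) j) k)^*)).
rewrite /index_iota /= !big_cons big_nil.
have ha := cos2Dsin2 a; have hb := cos2Dsin2 b.
case: i j => i Hi [j Hj] /=.
do 10? [case: i Hi => [|i] Hi]; last by [].
all: do 10? [case: j Hj => [|j] Hj]; last by [].
all: apply/eqP; rewrite eq_complex; apply/andP; split; apply/eqP; rewrite /=.
all: rewrite ?(ReD, ImD, ReM, ImM, ReN, ImN, ReJ, ImJ, Re1, Im1, Re0, Im0, Rei, Imi, ReMn, ImMn, ReE, ImE).
all: nra.
Qed.

Theorem mainTheorem4 (R : realType) (a b : R) :
  dephased_complex_hadamard (M10_2 a b).
Proof.
split; last exact: prodM.
{ move=> i j; rewrite mxE; apply: norm1.
  have ha := cos2Dsin2 a; have hb := cos2Dsin2 b.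
  case: i j => i Hi [j Hj] /=.
  do 10? [case: i Hi => [|i] Hi]; try by [].
  all: do 10? [case: j Hj => [|j] Hj]; try by [].
  all: rewrite /M10_2_rows /= ?(ReD, ImD, ReM, ImM, ReN, ImN, ReJ, ImJ, Re1, Im1, Re0, Im0, Rei, Imi, ReMn, ImMn, ReE, ImE).
  all: nra. }
{ move=> [j Hj]; rewrite mxE /=.
  by do 10? [case: j Hj => [|j] Hj]; last by []. }
{ move=> [i Hi]; rewrite mxE /=.
  by do 10? [case: i Hi => [|i] Hi]; last by []. }
Qed.
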